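(* A quiver $P$ is epi-projective in $\mathbf{Quiv}$ if and only if $P\cong I(S)\amalg M(T)$ for some sets $S$ and $T$.
   Context: A quiver is a quadruple $(V,E,\sigma,\tau)$ with $V,E$ sets and $\sigma,\tau : E \to V$ functions (source and target). A quiver homomorphism is a pair of functions on vertices and edges commuting with sources and targets; $\mathbf{Quiv}$ is the category of quivers and these homomorphisms, composed componentwise. A homomorphism is an epimorphism in $\mathbf{Quiv}$ iff both its vertex and edge maps are surjective. A quiver $P$ is epi-projective if for every epimorphism $\phi : G\to H$ and every homomorphism $\psi : P\to H$ there exists $\gamma : P\to G$ with $\phi\circ\gamma=\psi$. For a set $S$, $I(S)$ is the quiver with vertex set $S$ and no edges; $M(T)$ is the quiver with vertex set $\{0,1\}\times T$, edge set $T$, source $t\mapsto(0,t)$ and target $t\mapsto(1,t)$. $\amalg$ denotes disjoint union of quivers (disjoint union of vertex sets and of edge sets, with the induced source and target maps). *)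

(* Defs.v *)
Record quiver := Quiver {
  qV : Type;
  qE : Type;
  qsrc : qE -> qV;
  qtgt : qE -> qV
}.

Record qhom (G H : quiver) := QHom {
  hV : qV G -> qV H;
  hE : qE G -> qE H;
  hsrc : forall e, hV (qsrc G e) = qsrc H (hE e);
  htgt : forall e, hV (qtgt G e) = qtgt H (hE e)
}.
Arguments hV {G H} _ _.
Arguments hE {G H} _ _.

Definition qid (G : quiver) : qhom G G :=
  QHom G G (fun v => v) (fun e => e) (fun e => eq_refl) (fun e => eq_refl).

Definition qcomp {G H K : quiver} (g : qhom H K) (f : qhom G H) : qhom G K.
Proof.
  refine (QHom G K (fun v => hV g (hV f v)) (fun e => hE g (hE f e)) _ _).
  - intro e. rewrite (hsrc _ _ f e). apply (hsrc _ _ g).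
  - intro e. rewrite (htgt _ _ f e). apply (htgt _ _ g).
Defined.

Definition epimorphism {G H : quiver} (phi : qhom G H) : Prop :=
  forall (K : quiver) (g h : qhom H K), qcomp g phi = qcomp h phi -> g = h.

Definition epi_projective (P : quiver) : Prop :=
  forall (G H : quiver) (phi : qhom G H) (psi : qhom P H),
    epimorphism phi -> exists gamma : qhom P G, qcomp phi gamma = psi.

Definition quiver_iso (P Q : quiver) : Prop :=
  exists (f : qhom P Q) (g : qhom Q P), qcomp g f = qid P /\ qcomp f g = qid Q.

Definition Iq (S : Type) : quiver :=
  Quiver S Empty_set (fun e => match e with end) (fun e => match e with end).

(* M(T): vertices {0,1} x T (0 = false, 1 = true), edges T, t : (0,t) -> (1,t). *)
Definition Mq (T : Type) : quiver :=
  Quiver (bool * T) T (fun t => (false, t)) (fun t => (true, t)).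

Definition qsum (A B : quiver) : quiver :=
  Quiver (qV A + qV B) (qE A + qE B)
    (fun e => match e with inl a => inl (qsrc A a) | inr b => inr (qsrc B b) end)
    (fun e => match e with inl a => inl (qtgt A a) | inr b => inr (qtgt B b) end).

(* Main.v *)
Require Import Defs.
From Stdlib Require Import FunctionalExtensionality PropExtensionality ProofIrrelevance IndefiniteDescription.

Lemma qhom_ext {G H : quiver} (f g : qhom G H) :
  (forall v, hV f v = hV g v) -> (forall e, hE f e = hE g e) -> f = g.
Proof.
  destruct f as [fv fe fs ft], g as [gv ge gs gt]; simpl; intros HV HE.
  assert (fv = gv) by (apply functional_extensionality; auto).
  assert (fe = ge) by (apply functional_extensionality; auto).
  subst. f_equal; apply proof_irrelevance.
Qed.

Lemma epi_surjV {G H : quiver} (phi : qhom G H) :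
  epimorphism phi -> forall v, exists x, hV phi x = v.
Proof.
  intros Hep v.
  pose (K := Quiver Prop (Prop * Prop) fst snd).
  pose (g := QHom H K (fun _ => True) (fun _ => (True, True)) (fun _ => eq_refl) (fun _ => eq_refl)).
  pose (hv := fun w => exists x, hV phi x = w).
  pose (h := QHom H K hv (fun e => (hv (qsrc H e), hv (qtgt H e))) (fun _ => eq_refl) (fun _ => eq_refl)).
  assert (E : g = h).
  { apply Hep. apply qhom_ext; simpl.
    - intro x. apply propositional_extensionality. unfold hv. split; [intros _; exists x; reflexivity|trivial].
    - intro x. unfold hv. f_equal; apply propositional_extensionality; split; try (intros; exact I).
      + intros _. exists (qsrc G x). apply hsrc.
      + intros _. exists (qtgt G x). apply htgt. }
  assert (E2 : hV g v = hV h v) by (rewrite E; reflexivity).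
  simpl in E2. unfold hv in E2. rewrite <- E2. exact I.
Qed.

Lemma epi_surjE {G H : quiver} (phi : qhom G H) :
  epimorphism phi -> forall e, exists x, hE phi x = e.
Proof.
  intros Hep v.
  pose (K := Quiver unit Prop (fun _ => tt) (fun _ => tt)).
  pose (g := QHom H K (fun _ => tt) (fun _ => True) (fun _ => eq_refl) (fun _ => eq_refl)).
  pose (he := fun w => exists x, hE phi x = w).
  pose (h := QHom H K (fun _ => tt) he (fun _ => eq_refl) (fun _ => eq_refl)).
  assert (E : g = h).
  { apply Hep. apply qhom_ext; simpl.
    - reflexivity.
    - intro x. apply propositional_extensionality. unfold he. split; [intros _; exists x; reflexivity|trivial]. }
  assert (E2 : hE g v = hE h v) by (rewrite E; reflexivity).
  simpl in E2. unfold he in E2. rewrite <- E2. exact I.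
Qed.

Lemma std_proj (S T : Type) : epi_projective (qsum (Iq S) (Mq T)).
Proof.
  intros G H phi psi Hep.
  pose proof (epi_surjV phi Hep) as SV.
  pose proof (epi_surjE phi Hep) as SE.
  set (secV := fun v => proj1_sig (constructive_indefinite_description _ (SV v))).
  set (secE := fun e => proj1_sig (constructive_indefinite_description _ (SE e))).
  assert (HsV : forall v, hV phi (secV v) = v).
  { intro v. unfold secV. destruct (constructive_indefinite_description _ (SV v)); auto. }
  assert (HsE : forall e, hE phi (secE e) = e).
  { intro v. unfold secE. destruct (constructive_indefinite_description _ (SE v)); auto. }
  set (Q := qsum (Iq S) (Mq T)).
  pose (gv := fun (x : qV Q) => match x with
      | inl s => secV (hV psi (inl s))
      | inr (b, t) => if b then qtgt G (secE (hE psi (inr t))) else qsrc G (secE (hE psi (inr t)))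
      end).
  pose (ge := fun (x : qE Q) => match x with
      | inl z => match z with end
      | inr t => secE (hE psi (inr t)) end).
  assert (gs : forall e, gv (qsrc Q e) = qsrc G (ge e)) by (intros [[]|t]; reflexivity).
  assert (gt : forall e, gv (qtgt Q e) = qtgt G (ge e)) by (intros [[]|t]; reflexivity).
  exists (QHom Q G gv ge gs gt).
  apply qhom_ext; simpl.
  - intros [s|[[|] t]]; simpl.
    + apply HsV.
    + rewrite (htgt _ _ phi), HsE. exact (eq_sym (htgt _ _ psi (inr t))).
    + rewrite (hsrc _ _ phi), HsE. exact (eq_sym (hsrc _ _ psi (inr t))).
  - intros [[]|t]; simpl. apply HsE.
Qed.

Lemma proj_iso (P Q : quiver) : quiver_iso P Q -> epi_projective Q -> epi_projective P.
Proof.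
  intros [f [g [Hgf Hfg]]] HQ G H phi psi Hep.
  destruct (HQ G H phi (qcomp psi g) Hep) as [gam Hgam].
  exists (qcomp gam f).
  apply qhom_ext.
  - intro v. simpl.
    change (hV phi (hV gam (hV f v))) with (hV (qcomp phi gam) (hV f v)).
    rewrite Hgam. simpl.
    change (hV g (hV f v)) with (hV (qcomp g f) v). rewrite Hgf. reflexivity.
  - intro v. simpl.
    change (hE phi (hE gam (hE f v))) with (hE (qcomp phi gam) (hE f v)).
    rewrite Hgam. simpl.
    change (hE g (hE f v)) with (hE (qcomp g f) v). rewrite Hgf. reflexivity.
Qed.

Section Forward.
Variable P : quiver.
Definition GP := qsum (Iq (qV P)) (Mq (qE P)).
Definition phiV (x : qV GP) : qV P :=
  match x with inl v => v | inr (b, e) => if b then qtgt P e else qsrc P e end.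
Definition phiE (x : qE GP) : qE P :=
  match x with inl z => match z with end | inr e => e end.
Lemma phis : forall e, phiV (qsrc GP e) = qsrc P (phiE e).
Proof. intros [[]|e]; reflexivity. Qed.
Lemma phit : forall e, phiV (qtgt GP e) = qtgt P (phiE e).
Proof. intros [[]|e]; reflexivity. Qed.
Definition phi : qhom GP P := QHom GP P phiV phiE phis phit.

Lemma phi_epi : epimorphism phi.
Proof.
  intros K g h E. apply qhom_ext.
  - intro v. change (hV (qcomp g phi) (inl v) = hV (qcomp h phi) (inl v)). rewrite E; reflexivity.
  - intro v. change (hE (qcomp g phi) (inr v) = hE (qcomp h phi) (inr v)). rewrite E; reflexivity.
Qed.

Variable gam : qhom P GP.
Hypothesis Hgam : qcomp phi gam = qid P.

Lemma gamV v : phiV (hV gam v) = v.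
Proof. change (hV (qcomp phi gam) v = hV (qid P) v). rewrite Hgam; reflexivity. Qed.
Lemma gamE e : hE gam e = inr e.
Proof.
  assert (H : hE (qcomp phi gam) e = hE (qid P) e) by (rewrite Hgam; reflexivity).
  simpl in H. destruct (hE gam e) as [[]|e']; simpl in H; subst; reflexivity.
Qed.
Lemma gam_src e : hV gam (qsrc P e) = inr (false, e).
Proof. rewrite (hsrc _ _ gam), gamE. reflexivity. Qed.
Lemma gam_tgt e : hV gam (qtgt P e) = inr (true, e).
Proof. rewrite (htgt _ _ gam), gamE. reflexivity. Qed.

Definition SS := {u : qV P | hV gam u = inl u}.
Definition Q := qsum (Iq SS) (Mq (qE P)).

Definition fV' (v : qV P) (x : qV GP) : hV gam v = x -> qV Q :=
  match x with
  | inl u => fun H => inl (exist (fun w : qV P => hV gam w = inl w) u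
       (eq_ind v (fun w => hV gam w = inl u) H u
         (eq_trans (eq_sym (gamV v)) (f_equal phiV H))))
  | inr p => fun _ => inr p
  end.
Definition fV v := fV' v (hV gam v) eq_refl.
Lemma fV_eq v x (H : hV gam v = x) : fV v = fV' v x H.
Proof. destruct H. reflexivity. Qed.

Definition fE (e : qE P) : qE Q := inr e.
Lemma fs e : fV (qsrc P e) = qsrc Q (fE e).
Proof. rewrite (fV_eq _ _ (gam_src e)). reflexivity. Qed.
Lemma ft e : fV (qtgt P e) = qtgt Q (fE e).
Proof. rewrite (fV_eq _ _ (gam_tgt e)). reflexivity. Qed.
Definition fh : qhom P Q := QHom P Q fV fE fs ft.

Definition gV (x : qV Q) : qV P :=
  match x with inl s => proj1_sig s | inr (b, e) => if b then qtgt P e else qsrc P e end.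
Definition gE (x : qE Q) : qE P :=
  match x with inl z => match z with end | inr e => e end.
Lemma gs : forall e, gV (qsrc Q e) = qsrc P (gE e).
Proof. intros [[]|e]; reflexivity. Qed.
Lemma gt : forall e, gV (qtgt Q e) = qtgt P (gE e).
Proof. intros [[]|e]; reflexivity. Qed.
Definition gh : qhom Q P := QHom Q P gV gE gs gt.

Lemma iso : quiver_iso P Q.
Proof.
  exists fh, gh. split; apply qhom_ext; simpl.
  - intro v. rewrite (fV_eq v _ eq_refl).
    pose proof (gamV v) as G1. revert G1.
    generalize (@eq_refl _ (hV gam v)).
    generalize (hV gam v) at 2 3 4.
    intros x Hx. destruct x as [u|[b e]]; simpl; intro G1.
    + exact G1.
    + exact G1.
  - reflexivity.
  - intros [[u pu]|[[|] e]]; simpl.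
    + rewrite (fV_eq u _ pu). simpl. f_equal. f_equal. apply proof_irrelevance.
    + rewrite (fV_eq _ _ (gam_tgt e)). reflexivity.
    + rewrite (fV_eq _ _ (gam_src e)). reflexivity.
  - intros [[]|e]; reflexivity.
Qed.
End Forward.

Theorem mainTheorem6 (P : quiver) :
  epi_projective P <-> exists (S T : Type), quiver_iso P (qsum (Iq S) (Mq T)).
Proof.
  split.
  - intro HP.
    destruct (HP (GP P) P (phi P) (qid P) (phi_epi P)) as [gam Hgam].
    exists (SS P gam), (qE P). exact (iso P gam Hgam).
  - intros [S [T Hi]]. exact (proj_iso _ _ Hi (std_proj S T)).
Qed.
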